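(* Fix $\lambda\ge0$, $n,m\ge1$, $N=n+m$, points $Z_1,\dots,Z_N\in\mathcal Z=\mathcal X\times\mathcal W$ and responses $Y_1,\dots,Y_n$. In the setting and notation described in the context (Hilbert space $\bar{\mathcal K}$ with inner product $\langle\cdot,\cdot\rangle_\star$, embedded dictionaries $\mathcal D_f^\star,\mathcal D_g^\star$, and the iterates of Algorithm 1), for every $k\ge1$, $$A_k:=\sup_{a\in\mathcal D_f^\star}\langle r_k,a\rangle_\star\le R_\lambda\alpha_k,\qquad B_k:=\sup_{b\in\mathcal D_g^\star}\langle r_k,b\rangle_\star\le R_\lambda\alpha_k+R_\lambda\beta_k,$$ where $R_\lambda=\max\{1,\sqrt\lambda\}$.
   Context: Let $\hat P^{(1)}=\frac1N\sum_{i=1}^n\delta_{Z_i}$, $\hat P^{(2)}=\frac1N\sum_{j=n+1}^N\delta_{Z_j}$, $\hat P^{(3)}=\lambda\hat P^{(1)}$, and $\hat P_N^Z=\hat P^{(1)}+\hat P^{(2)}$. For pairs $u=(u_1,u_2)$, $v=(v_1,v_2)$ of real functions on $\{Z_1,\dots,Z_N\}$ define $\langle u,v\rangle_\star=\langle u_1,v_1\rangle_{L^2(\hat P^{(1)})}+\langle u_1-u_2,v_1-v_2\rangle_{L^2(\hat P^{(2)})}+\langle u_2,v_2\rangle_{L^2(\hat P^{(3)})}$; this is positive semidefinite, and $\bar{\mathcal K}$ is the quotient by its null space (all projections, norms $\|\cdot\|_\star$, orthogonality below are in $\bar{\mathcal K}$). Let $Y$ be any extension of the labels to all $N$ points and $T=(Y,Y)$.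 Let $\mathcal D_f$ be a finite dictionary of functions of $x$ (viewed on $\mathcal Z$) and $\mathcal D_g$ a finite dictionary of functions on $\mathcal Z$, all with $\|\cdot\|_{L^2(\hat P_N^Z)}\le1$; set $\mathcal D_f^\star=\{(\psi,0):\psi\in\mathcal D_f\}$, $\mathcal D_g^\star=\{(0,\phi):\phi\in\mathcal D_g\}$, and assume $\mathcal D_f^\star\cup\mathcal D_g^\star$ is closed under negation. Algorithm 1: set $(f_0,g_0)=(0,0)$, $S_0^f=S_0^g=\{0\}$; for $k=1,2,\dots$: $r_k=T-(f_{k-1},g_{k-1})$; choose $\psi_k^\star=(\psi_k,0)\in\arg\max\{\langle r_k,\Pi^\perp_{S_{k-1}^f}a\rangle_\star/\|\Pi^\perp_{S_{k-1}^f}a\|_\star: a\in\mathcal D_f^\star,\ \|\Pi^\perp_{S_{k-1}^f}a\|_\star>0\}$; set $S_k^f=\mathrm{span}(\psi_1^\star,\dots,\psi_k^\star)$, $(f_k,g_{k-1})=(f_{k-1},g_{k-1})+\Pi_{S_k^f}r_k$, $r_k^{(g)}=r_k-\Pi_{S_k^f}r_k$; choose $\phi_k^\star=(0,\phi_k)\in\arg\max\{\langle r_k^{(g)},\Pi^\perp_{S_{k-1}^g}b\rangle_\star/\|\Pi^\perp_{S_{k-1}^g}b\|_\star: b\in\mathcal D_g^\star,\ \|\Pi^\perp_{S_{k-1}^g}b\|_\star>0\}$; set $S_k^g=\mathrm{span}(\phi_1^\star,\dots,\phi_k^\star)$ and $(f_k,g_k)=(f_k,g_{k-1})+\Pi_{S_k^g}r_k^{(g)}$.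 Here $\Pi_S$, $\Pi_S^\perp$ are orthogonal projections onto $S$ and its orthogonal complement. Define $\alpha_k=\|\Pi_{S_k^f}r_k\|_\star$ and $\beta_k=\|\Pi_{S_k^g}r_k^{(g)}\|_\star$. *)

(* Defs.v *)
From HB Require Import structures.
From mathcomp Require Import all_boot all_order all_algebra.
Set Implicit Arguments. Unset Strict Implicit. Unset Printing Implicit Defensive.
Import Order.TTheory GRing.Theory Num.Theory.
Local Open Scope ring_scope.

Section Setting.
Variables (R : rcfType) (lam : R) (n m : nat).
(* N = n + m sample points, indexed by 'I_(n+m); point t is in the first
   (labelled) sample iff t < n. *)
Local Notation N := (n + m)%N.

(* Real functions on {Z_1,...,Z_N} and pairs of them. *)
Definition fn := {ffun 'I_N -> R}.
Definition pairV := (fn * fn)%type.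

(* <u,v>_star = <u1,v1>_{L2(P1)} + <u1-u2,v1-v2>_{L2(P2)} + <u2,v2>_{L2(P3)},
   with P1 = (1/N) sum_{t<n} delta, P2 = (1/N) sum_{t>=n} delta, P3 = lam P1. *)
Definition ipS (u v : pairV) : R :=
  (N%:R)^-1 * \sum_(t < N)
     (if (t < n)%N then u.1 t * v.1 t + lam * (u.2 t * v.2 t)
      else (u.1 t - u.2 t) * (v.1 t - v.2 t)).

Definition normS (u : pairV) : R := Num.sqrt (ipS u u).

Definition in_span (s : seq pairV) (v : pairV) : Prop :=
  exists c : 'I_(size s) -> R,
    forall t, v.1 t = \sum_(i < size s) c i * (s`_i).1 t /\
              v.2 t = \sum_(i < size s) c i * (s`_i).2 t.

(* p is (a representative, taken in span s, of) the orthogonal projection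
   Pi_{span s} r in the quotient Hilbert space Kbar. *)
Definition is_proj (s : seq pairV) (r p : pairV) : Prop :=
  in_span s p /\ forall w, w \in s -> ipS (r - p) w = 0.

(* the greedy selection criterion <r, Pi^perp a>_star / ||Pi^perp a||_star,
   where Pi^perp a = a - pa. *)
Definition ratioS (r a pa : pairV) : R := ipS r (a - pa) / normS (a - pa).

Definition is_argmax (I : Type) (emb : I -> pairV) (s : seq pairV)
    (r : pairV) (b : pairV) : Prop :=
  exists pb, is_proj s b pb /\ 0 < normS (b - pb) /\
    forall i pa, is_proj s (emb i) pa -> 0 < normS (emb i - pa) ->
      ratioS r (emb i) pa <= ratioS r b pb.

Variables (X W : Type) (Z : 'I_N -> (X * W)%type) (Y : 'I_N -> R).
Variables (I J : finType) (psi : I -> X -> R) (phi : J -> (X * W)%type -> R).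

Definition targetT : pairV := ([ffun t => Y t], [ffun t => Y t]).
Definition embf (i : I) : pairV := ([ffun t => psi i (Z t).1], 0).
Definition embg (j : J) : pairV := (0, [ffun t => phi j (Z t)]).

Definition sqnormN (h : fn) : R := (N%:R)^-1 * \sum_(t < N) h t ^+ 2.

Variables (psidx : nat -> I) (phidx : nat -> J) (F : nat -> pairV).

Definition Sf (k : nat) : seq pairV := [seq embf (psidx j) | j <- iota 1 k].
Definition Sg (k : nat) : seq pairV := [seq embg (phidx j) | j <- iota 1 k].

Definition resid (k : nat) : pairV := targetT - F k.-1.

(* Step k (k >= 1) of Algorithm 1; F k = (f_k, g_k). *)
Definition alg_step (k : nat) : Prop :=
  is_argmax embf (Sf k.-1) (resid k) (embf (psidx k)) /\
  exists P1 P2,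
    is_proj (Sf k) (resid k) P1 /\
    is_argmax embg (Sg k.-1) (resid k - P1) (embg (phidx k)) /\
    is_proj (Sg k) (resid k - P1) P2 /\
    F k = F k.-1 + P1 + P2.

End Setting.

(* Main.v *)
Require Import Defs.
From HB Require Import structures.
From mathcomp Require Import all_boot all_order all_algebra.
From mathcomp Require Import ring lra.
Set Implicit Arguments. Unset Strict Implicit. Unset Printing Implicit Defensive.
Import Order.TTheory GRing.Theory Num.Theory.
Local Open Scope ring_scope.

Section Aux.
Variables (R : rcfType) (lam : R) (n m : nat).
Local Notation V := (pairV R n m).
Local Notation ip := (ipS lam).

Definition sc (a : R) (u : V) : V := ([ffun t => a * u.1 t], [ffun t => a * u.2 t]).

Lemma pD1 (u v : V) t : (u + v).1 t = u.1 t + v.1 t. Proof. by rewrite /= ffunE. Qed.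
Lemma pD2 (u v : V) t : (u + v).2 t = u.2 t + v.2 t. Proof. by rewrite /= ffunE. Qed.
Lemma pB1 (u v : V) t : (u - v).1 t = u.1 t - v.1 t. Proof. by rewrite /= !ffunE. Qed.
Lemma pB2 (u v : V) t : (u - v).2 t = u.2 t - v.2 t. Proof. by rewrite /= !ffunE. Qed.
Lemma p01 t : (0 : V).1 t = 0. Proof. by rewrite /= ffunE. Qed.
Lemma p02 t : (0 : V).2 t = 0. Proof. by rewrite /= ffunE. Qed.
Lemma sc1 a (u : V) t : (sc a u).1 t = a * u.1 t. Proof. by rewrite /= ffunE. Qed.
Lemma sc2 a (u : V) t : (sc a u).2 t = a * u.2 t. Proof. by rewrite /= ffunE. Qed.

Lemma ipC (u v : V) : ip u v = ip v u.
Proof. rewrite /ipS; congr (_ * _); apply: eq_bigr => t _; case: ifP => _; rewrite /=; ring. Qed.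

Lemma ipDl (u v w : V) : ip (u + v) w = ip u w + ip v w.
Proof.
rewrite /ipS -mulrDr -big_split; congr (_ * _); apply: eq_bigr => t _.
rewrite !pD1 !pD2; case: ifP => _; rewrite /=; ring.
Qed.

Lemma ipBl (u v w : V) : ip (u - v) w = ip u w - ip v w.
Proof.
rewrite /ipS -mulrBr -sumrB; congr (_ * _); apply: eq_bigr => t _.
rewrite !pB1 !pB2; case: ifP => _; rewrite /=; ring.
Qed.

Lemma ipZl a (u w : V) : ip (sc a u) w = a * ip u w.
Proof.
rewrite /ipS [RHS]mulrCA [X in _ = _ * X]mulr_sumr; congr (_ * _); apply: eq_bigr => t _.
rewrite !sc1 !sc2; case: ifP => _; rewrite /=; ring.
Qed.

Lemma ipDr (u v w : V) : ip w (u + v) = ip w u + ip w v.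
Proof. by rewrite ipC ipDl ![ip _ w]ipC. Qed.
Lemma ipBr (u v w : V) : ip w (u - v) = ip w u - ip w v.
Proof. by rewrite ipC ipBl ![ip _ w]ipC. Qed.
Lemma ipZr a (u w : V) : ip w (sc a u) = a * ip w u.
Proof. by rewrite ipC ipZl ipC. Qed.

Lemma ip_ge0 (u : V) : 0 <= lam -> 0 <= ip u u.
Proof.
move=> l0; rewrite /ipS; apply: mulr_ge0; first by rewrite invr_ge0 ler0n.
apply: sumr_ge0 => t _; rewrite /=.
case: ifP => _; last by rewrite -expr2 sqr_ge0.
by rewrite -!expr2; apply: addr_ge0; [exact: sqr_ge0 | apply: mulr_ge0; [exact: l0 | exact: sqr_ge0]].
Qed.

Lemma ip_span (s : seq V) (r p : V) (c : 'I_(size s) -> R) :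
  (forall t, p.1 t = \sum_(i < size s) c i * (s`_i).1 t /\
             p.2 t = \sum_(i < size s) c i * (s`_i).2 t) ->
  ip r p = \sum_(i < size s) c i * ip r s`_i.
Proof.
move=> hp; rewrite /ipS.
under [RHS]eq_bigr => i _ do rewrite mulrCA mulr_sumr.
rewrite -mulr_sumr; congr (_ * _); rewrite exchange_big /=; apply: eq_bigr => t _.
have [h1 h2] := hp t; rewrite h1 h2; case: ifP => _.
  rewrite !mulr_sumr -big_split /=; apply: eq_bigr => i _; rewrite /=; ring.
by rewrite -sumrB mulr_sumr; apply: eq_bigr => i _; rewrite /=; ring.
Qed.

Lemma orth_span (s s2 : seq V) (r p : V) :
  in_span s p -> {subset s <= s2} -> (forall w, w \in s2 -> ip r w = 0) -> ip r p = 0.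
Proof.
move=> [c hc] sub ho; rewrite (ip_span r hc) big1 // => i _.
by rewrite ho ?mulr0 // sub // mem_nth.
Qed.

Lemma ip_expand (u v : V) x :
  ip (u + sc x v) (u + sc x v) = ip u u + 2 * x * ip u v + x ^+ 2 * ip v v.
Proof.
rewrite !ipDl !ipDr !ipZl !ipZr [ip v u]ipC; rewrite /=; ring.
Qed.

Lemma ip_degen (r v : V) : 0 <= lam -> ip v v = 0 -> ip r v = 0.
Proof.
move=> l0 hv; apply/eqP; apply/negPn/negP => ha.
set a := ip r v in ha.
pose x := - (ip r r + 1) / (2 * a).
have := ip_ge0 (r + sc x v) l0; rewrite ip_expand hv -/a.
have -> : 2 * x * a = - (ip r r + 1) by rewrite /x; field.
rewrite mulr0 addr0; lra.
Qed.

Lemma normS_ge0 (u : V) : 0 <= normS lam u.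
Proof. exact: sqrtr_ge0. Qed.

Lemma normS_sq (u : V) : 0 <= lam -> normS lam u ^+ 2 = ip u u.
Proof. by move=> l0; rewrite /normS sqr_sqrtr // ip_ge0. Qed.

Lemma CS (x y : V) : 0 <= lam -> ip x y <= normS lam x * normS lam y.
Proof.
move=> l0; have [y0|ynz] := eqVneq (ip y y) 0.
  by rewrite (ip_degen x l0 y0) mulr_ge0 ?normS_ge0.
have ypos : 0 < ip y y by rewrite lt_def ynz ip_ge0.
have h : ip x y ^+ 2 <= ip x x * ip y y.
  have := ip_ge0 (x + sc (- (ip x y / ip y y)) y) l0; rewrite ip_expand.
  have -> : ip x x + 2 * - (ip x y / ip y y) * ip x y + (- (ip x y / ip y y)) ^+ 2 * ip y y
    = ip x x - ip x y ^+ 2 / ip y y by field.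
  by rewrite subr_ge0 ler_pdivrMr.
apply: (le_trans (ler_norm _)); rewrite -sqrtr_sqr /normS -sqrtrM ?ip_ge0 //.
by rewrite ler_sqrt // mulr_ge0 ?ip_ge0.
Qed.

Lemma span_step (w : V) (s : seq V) (p q : V) a :
  in_span s p -> in_span s q -> in_span (w :: s) (p + sc a (w - q)).
Proof.
move=> [c hc] [d hd].
exists (fun i : 'I_(size (w :: s)) => if unlift ord0 i is Some j then c j - a * d j else a).
move=> t; rewrite pD1 pD2 sc1 sc2 pB1 pB2 !big_ord_recl unlift_none.
have N0 : forall i : 'I_(size s), (w :: s)`_(lift ord0 i) = s`_i by [].
have W0 : (w :: s)`_ord0 = w by [].
rewrite W0.
have [h1 h2] := hc t; have [k1 k2] := hd t.
split.
  rewrite (eq_bigr (fun i : 'I_(size s) => c i * (s`_i).1 t - a * (d i * (s`_i).1 t))); last first.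
    by move=> i _; rewrite liftK N0 /=; ring.
  rewrite sumrB -mulr_sumr h1 k1 /=; ring.
rewrite (eq_bigr (fun i : 'I_(size s) => c i * (s`_i).2 t - a * (d i * (s`_i).2 t))); last first.
  by move=> i _; rewrite liftK N0 /=; ring.
rewrite sumrB -mulr_sumr h2 k2 /=; ring.
Qed.

Lemma proj_ex (s : seq V) (v : V) : 0 <= lam -> exists p, is_proj lam s v p.
Proof.
move=> l0; elim: s v => [|w s IH] v.
  exists 0; split => //; exists (fun _ => 0) => t.
  by rewrite !big_ord0 p01; split => //; rewrite /= ffunE.
have [q [hq oq]] := IH w; have [p' [hp op]] := IH v.
set e := w - q.
have oe : forall y, y \in s -> ip e y = 0 by [].
have eq0 : ip e q = 0 by apply: (orth_span hq (fun y (h : y \in s) => h)).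
have vq0 : ip (v - p') q = 0 by apply: (orth_span hq (fun y (h : y \in s) => h)).
have we : w = e + q by rewrite /e subrK.
clearbody e.
pose a := if ip e e == 0 then 0 else ip (v - p') e / ip e e.
have ha : ip (v - p') e = a * ip e e.
  rewrite /a; case: eqP => [h|h]; first by rewrite mul0r (ip_degen _ l0 h).
  by field; apply/eqP.
exists (p' + sc a e); split.
  have ee : e = w - q by rewrite we addrK.
  by rewrite ee; apply: span_step.
have -> : v - (p' + sc a e) = (v - p') - sc a e by rewrite opprD addrA.
move=> x; rewrite inE => /orP [/eqP -> | xs].
  rewrite we ipBl ipZl !ipDr eq0 vq0 !addr0 ha; ring.
by rewrite ipBl ipZl op // oe // mulr0 subr0.
Qed.

Lemma ip_pyth (x y : V) : ip x y = 0 -> ip (x + y) (x + y) = ip x x + ip y y.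
Proof. by move=> h; rewrite !ipDl !ipDr [ip y x]ipC h !addr0 add0r. Qed.

Lemma orth_of (s2 : seq V) (r P x : V) :
  (forall w, w \in s2 -> ip (r - P) w = 0) -> ip (r - P) x = 0 -> ip r x = ip P x.
Proof. by move=> _ h; apply/eqP; rewrite -subr_eq0 -ipBl h. Qed.

Lemma key (s s2 : seq V) (r r0 P b pb a pa : V) :
  0 <= lam ->
  is_proj lam s2 r P ->
  {subset s <= s2} -> b \in s2 ->
  is_proj lam s b pb -> 0 < normS lam (b - pb) ->
  is_proj lam s a pa ->
  (forall x, ip r0 x = ip r x) ->
  (0 < normS lam (a - pa) -> ratioS lam r0 a pa <= ratioS lam r0 b pb) ->
  ip r a <= normS lam P * normS lam a.
Proof.
move=> l0 [hP oP] sub bs2 [hpb opb] nupos [hpa opa] hr0 H.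
set u := b - pb in nupos opb *; set nu := normS lam u in nupos.
set t := normS lam (a - pa) in H.
have rPu : ip r u = ip P u.
  apply: (orth_of oP); rewrite /u ipBr oP // (orth_span hpb sub oP); exact: subrr.
have rPpa : ip r pa = ip P pa.
  by apply: (orth_of oP); rewrite (orth_span hpa sub oP).
have upa : ip pa u = 0 by rewrite ipC (orth_span hpa (fun y (h : y \in s) => h) opb).
have apa : ip pa (a - pa) = 0 by rewrite ipC (orth_span hpa (fun y (h : y \in s) => h) opa).
have h1 : ip r (a - pa) <= t * (ip P u / nu).
  have [tpos | tn] := boolP (0 < t).
    have := H tpos; rewrite /ratioS !hr0 -/u -/nu -/t rPu ler_pdivrMr //.
    by rewrite mulrC.
  have t0 : t = 0 by apply/eqP; rewrite eq_le normS_ge0 andbT leNgt.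
  have : ip (a - pa) (a - pa) = 0 by rewrite -normS_sq // -/t t0 expr0n.
  by move/(ip_degen r l0) ->; rewrite t0 mul0r.
have -> : ip r a = ip r pa + ip r (a - pa) by rewrite -ipDr addrCA subrr addr0.
rewrite rPpa.
have E : ip P pa + t * (ip P u / nu) = ip P (pa + sc (t / nu) u).
  by rewrite ipDr ipZr; rewrite /=; field; rewrite gt_eqF.
apply: (le_trans (lerD (lexx _) h1)); rewrite E.
apply: (le_trans (CS _ _ l0)).
have -> : normS lam (pa + sc (t / nu) u) = normS lam a; last by [].
rewrite /normS; congr Num.sqrt.
have aE : pa + (a - pa) = a by rewrite addrCA subrr addr0.
have := ip_pyth apa; rewrite aE => ->.
rewrite ip_pyth; last by rewrite ipZr upa mulr0.
rewrite ipZl ipZr -!normS_sq // -/t -/nu; congr (_ + _).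
by field; rewrite gt_eqF.
Qed.

Lemma ip_le_sq (u : V) (h : fn R n m) c :
  (forall t : 'I_(n + m), (if (t < n)%N then u.1 t * u.1 t + lam * (u.2 t * u.2 t)
    else (u.1 t - u.2 t) * (u.1 t - u.2 t)) <= c * h t ^+ 2) ->
  ip u u <= c * sqnormN h.
Proof.
move=> H; rewrite /ipS /sqnormN [X in _ <= X]mulrCA [X in _ <= _ * X]mulr_sumr.
apply: ler_wpM2l; first by rewrite invr_ge0 ler0n.
by apply: ler_sum => t _; exact: H.
Qed.

Lemma proj_same (s : seq V) (r P P' x : V) :
  0 <= lam -> is_proj lam s r P -> is_proj lam s r P' -> ip (r - P') x = ip (r - P) x.
Proof.
move=> l0 [hP oP] [hP' oP'].
have dE : (r - P') - (r - P) = P - P' by rewrite opprB addrC addrA subrK.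
have od : forall w, w \in s -> ip (P - P') w = 0.
  by move=> w ws; rewrite -dE ipBl oP // oP' // subrr.
have dd : ip (P - P') (P - P') = 0.
  rewrite ipBr (orth_span hP (fun y (h : y \in s) => h) od).
  by rewrite (orth_span hP' (fun y (h : y \in s) => h) od) subrr.
apply/eqP; rewrite -subr_eq0 -ipBl dE ipC; apply/eqP; exact: ip_degen.
Qed.

End Aux.

Theorem lemmaC4 (R : rcfType) (lam : R) (n m : nat)
  (X W : Type) (Z : 'I_(n + m) -> (X * W)%type) (Y : 'I_(n + m) -> R)
  (I J : finType) (psi : I -> X -> R) (phi : J -> (X * W)%type -> R)
  (psidx : nat -> I) (phidx : nat -> J) (F : nat -> pairV R n m) (K : nat) :
  0 <= lam -> (1 <= n)%N -> (1 <= m)%N ->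
  (forall i, sqnormN [ffun t => psi i (Z t).1] <= 1) ->
  (forall j, sqnormN [ffun t => phi j (Z t)] <= 1) ->
  (* D_f^star \cup D_g^star closed under negation *)
  (forall i, (exists i', embf Z psi i' = - embf Z psi i) \/
             (exists j, embg Z phi j = - embf Z psi i)) ->
  (forall j, (exists i, embf Z psi i = - embg Z phi j) \/
             (exists j', embg Z phi j' = - embg Z phi j)) ->
  F 0%N = 0 ->
  (forall k, (1 <= k <= K)%N -> alg_step lam Z Y psi phi psidx phidx F k) ->
  (1 <= K)%N ->
  let RL := Num.max 1 (Num.sqrt lam) in
  let rK := resid Y F K in
  forall P1 P2,
    is_proj lam (Sf Z psi psidx K) rK P1 ->
    is_proj lam (Sg Z phi phidx K) (rK - P1) P2 ->
    (forall i, ipS lam (rK) (embf Z psi i) <= RL * normS lam P1) /\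
    (forall j, ipS lam (rK) (embg Z phi j) <= RL * normS lam P1 + RL * normS lam P2).
Proof.
move=> l0 _ _ hf hg _ _ _ alg K1 RL rK P1 P2 hP1 hP2.
have [hargf [P1' [P2' [hP1' [hargg _]]]]] : alg_step lam Z Y psi phi psidx phidx F K.
  by apply: alg; rewrite K1 leqnn.
have RL1 : 1 <= RL by rewrite /RL le_max lexx.
have RL0 : 0 <= RL by apply: le_trans RL1.
have RLs : Num.sqrt lam <= RL by rewrite /RL le_max lexx orbT.
destruct K as [|K']; first by [].
have eK : iota 1 K'.+1 = iota 1 K' ++ [:: K'.+1] by have e := iotaD 1 K' 1; rewrite addn1 in e; rewrite e add1n.
have subf : {subset Sf Z psi psidx K' <= Sf Z psi psidx K'.+1}.
  by move=> x; rewrite /Sf eK map_cat mem_cat => ->.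
have inf : embf Z psi (psidx K'.+1) \in Sf Z psi psidx K'.+1.
  by rewrite /Sf eK map_cat mem_cat /= inE eqxx orbT.
have subg : {subset Sg Z phi phidx K' <= Sg Z phi phidx K'.+1}.
  by move=> x; rewrite /Sg eK map_cat mem_cat => ->.
have ing : embg Z phi (phidx K'.+1) \in Sg Z phi phidx K'.+1.
  by rewrite /Sg eK map_cat mem_cat /= inE eqxx orbT.
have nf : forall i, normS lam (embf Z psi i) <= 1.
  move=> i; rewrite /normS -sqrtr1 ler_sqrt //.
  apply: (le_trans (@ip_le_sq R lam n m (embf Z psi i) [ffun t => psi i (Z t).1] 1 _)); last by rewrite mul1r hf.
  move=> t; rewrite /= !ffunE mul1r; case: ifP => _; rewrite /=; lra.
have ng : forall j, normS lam (embg Z phi j) <= RL.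
  move=> j; have [hl|hl] := leP lam 1.
    apply: le_trans RL1; rewrite /normS -sqrtr1 ler_sqrt //.
    apply: (le_trans (@ip_le_sq R lam n m (embg Z phi j) [ffun t => phi j (Z t)] 1 _)); last by rewrite mul1r hg.
    move=> t; rewrite /= !ffunE mul1r; have sq := sqr_ge0 (phi j (Z t)).
    case: ifP => _; rewrite /=; nra.
  apply: le_trans RLs; rewrite /normS; apply: ler_wsqrtr.
  apply: (le_trans (@ip_le_sq R lam n m (embg Z phi j) [ffun t => phi j (Z t)] lam _)).
    move=> t; rewrite /= !ffunE; have sq := sqr_ge0 (phi j (Z t)).
    case: ifP => _; rewrite /=; nra.
  by rewrite ler_piMr ?hg // ltW // (lt_trans ltr01 hl).
split.
  move=> i; have [pa hpa] := proj_ex (Sf Z psi psidx K') (embf Z psi i) l0.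
  have [pb [hpb [nub Hf]]] := hargf.
  have k := key l0 hP1 subf inf hpb nub hpa (fun x => erefl) (Hf i pa hpa).
  apply: (le_trans k); rewrite mulrC.
  by apply: ler_wpM2r; [exact: normS_ge0 | exact: le_trans (nf i) RL1].
move=> j; have [pa hpa] := proj_ex (Sg Z phi phidx K') (embg Z phi j) l0.
have [pb [hpb [nub Hg]]] := hargg.
have k := key l0 hP2 subg ing hpb nub hpa (fun x => proj_same x l0 hP1 hP1') (Hg j pa hpa).
have -> : ipS lam rK (embg Z phi j) = ipS lam P1 (embg Z phi j) + ipS lam (rK - P1) (embg Z phi j).
  by rewrite ipBl addrC subrK.
apply: lerD.
  apply: (le_trans (CS _ _ l0)); rewrite mulrC; by apply: ler_wpM2r; [exact: normS_ge0 | exact: ng].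
apply: (le_trans k); rewrite mulrC; by apply: ler_wpM2r; [exact: normS_ge0 | exact: ng].
Qed.
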